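(* For matrices $A\in\mathbb{Z}_{\geq0}^{m\times 3}$ there exists a polynomial-time 2-approximation algorithm for computing $\gamma(A)$.
   Context: For $A\in\mathbb{R}^{m\times d}$ and $\Pi=(\pi_1,\dots,\pi_d)\in\mathfrak{S}(m)^d$ (where $\mathfrak{S}(m)$ is the symmetric group on $\{1,\dots,m\}$), $A^\Pi$ denotes the matrix with $A^\Pi_{i,j}=A_{\pi_j^{-1}(i),j}$. Define $\gamma(A)=\min_{\Pi\in\mathfrak{S}(m)^d}\max_{1\leq i\leq m}\sum_{j=1}^d A^\Pi_{i,j}$, the smallest achievable maximal row sum after permuting the entries within each column independently. A 2-approximation algorithm outputs column permutations whose maximal row sum is at most $2\gamma(A)$. *)

(* Defs.v *)
From mathcomp Require Import all_boot all_order all_fingroup all_algebra.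
Set Implicit Arguments. Unset Strict Implicit. Unset Printing Implicit Defensive.

Definition permute_cols (m d : nat) (A : 'M[nat]_(m, d))
  (P : {ffun 'I_d -> 'S_m}) : 'M[nat]_(m, d) :=
  \matrix_(i < m, j < d) A (((P j)^-1)%g i) j.

Definition maxrowsum (m d : nat) (A : 'M[nat]_(m, d))
  (P : {ffun 'I_d -> 'S_m}) : nat :=
  \max_(i < m) \sum_(j < d) permute_cols A P i j.

Definition gamma (m d : nat) (A : 'M[nat]_(m, d)) : nat :=
  maxrowsum A [arg min_(P < [ffun => 1%g] : {ffun 'I_d -> 'S_m}) maxrowsum A P].

(* Memory is nat -> nat (cells = registers). Unit-cost RAM without
   multiplication is polynomially equivalent to Turing machines. *)
Inductive instr : Type :=
| IConst of nat & nat
| IAdd of nat & nat & nat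
| ISub of nat & nat & nat    (* ISub r a b   : mem[r] := mem[a] - mem[b] (trunc) *)
| ILoad of nat & nat
| IStore of nat & nat
| IJle of nat & nat & nat
| IHalt.

Definition upd (M : nat -> nat) (x v : nat) : nat -> nat :=
  fun y => if y == x then v else M y.

(* one step; None when the machine has halted (pc out of range or IHalt) *)
Definition step (p : seq instr) (s : nat * (nat -> nat)) :
  option (nat * (nat -> nat)) :=
  let: (pc, M) := s in
  match nth IHalt p pc with
  | IConst r c => Some (pc.+1, upd M r c)
  | IAdd r a b => Some (pc.+1, upd M r (M a + M b))
  | ISub r a b => Some (pc.+1, upd M r (M a - M b))
  | ILoad r a => Some (pc.+1, upd M r (M (M a)))
  | IStore a r => Some (pc.+1, upd M (M a) (M r))
  | IJle a b l => Some (if M a <= M b then l else pc.+1, M)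
  | IHalt => None
  end.

Fixpoint exec (p : seq instr) (t : nat) (s : nat * (nat -> nat)) :
  option (nat -> nat) :=
  match step p s with
  | None => Some s.2
  | Some s' => if t is t'.+1 then exec p t' s' else None
  end.

(* entry (r, c) of A, 0 outside the range *)
Definition entry (m d : nat) (A : 'M[nat]_(m, d)) (r c : nat) : nat :=
  match @insub nat (fun x => x < m) 'I_m r, @insub nat (fun x => x < d) 'I_d c with
  | Some i, Some j => A i j
  | _, _ => 0
  end.

(* Input encoding: mem[0] = m, mem[1 + d*i + j] = A i j, all else 0. *)
Definition encode_input (m d : nat) (A : 'M[nat]_(m, d)) : nat -> nat :=
  fun x => match x with
           | 0 => m
           | y.+1 => if y < d * m then entry A (y %/ d) (y %% d) else 0
           end.

(* Output convention: mem[1 + d*i + j] = pi_j(i), the row to which the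
   entry (i, j) is moved. *)
Definition output_encodes (m d : nat) (M : nat -> nat)
  (P : {ffun 'I_d -> 'S_m}) : Prop :=
  forall (i : 'I_m) (j : 'I_d), M (1 + d * i + j) = nat_of_ord (P j i).

Definition input_size (m d : nat) (A : 'M[nat]_(m, d)) : nat :=
  m + \sum_(i < m) \sum_(j < d) (trunc_log 2 (A i j)).+1.

(* Main.v *)
Require Import Defs.
From mathcomp Require Import all_boot all_order all_fingroup all_algebra.
From mathcomp Require Import zify.
Set Implicit Arguments. Unset Strict Implicit. Unset Printing Implicit Defensive.

Definition rank (lt : nat -> nat -> bool) (m i : nat) := count (fun k => lt k i) (iota 0 m).

Lemma count_strict (a b : pred nat) s :
  subpred a b -> has (predD b a) s -> count a s < count b s.
Proof.
move=> sab; elim: s => //= x s IH /orP[/andP[nax bx]|h].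
  rewrite (negbTE nax) bx /= add0n add1n ltnS; exact: sub_count.
have := IH h; case: (a x) (@sab x) => [->//|_]; rewrite ?add0n; lia.
Qed.

Lemma rank_lt (lt : nat -> nat -> bool) m i :
  (forall x, lt x x = false) -> i < m -> rank lt m i < m.
Proof.
move=> ltirr im; rewrite /rank -[X in _ < X](size_iota 0 m) -count_predT.
apply: count_strict => //; apply/hasP; exists i; rewrite ?mem_iota //= ?ltirr; lia.
Qed.

Lemma rank_mono (lt : nat -> nat -> bool) m k i :
  (forall x, lt x x = false) -> (forall x y z, lt x y -> lt y z -> lt x z) ->
  k < m -> lt k i -> rank lt m k < rank lt m i.
Proof.
move=> ltirr lttr km lki; apply: count_strict.
  by move=> x /= lxk; apply: lttr lxk lki.
by apply/hasP; exists k; rewrite ?mem_iota //= ltirr lki.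
Qed.

Definition ltl (f : nat -> nat) k i := (f k < f i) || (f k == f i) && (k < i).
Definition ltf (f : nat -> nat) k i := ltl f i k.

Lemma ltl_irr f x : ltl f x x = false.
Proof. rewrite /ltl; lia. Qed.
Lemma ltl_tr f x y z : ltl f x y -> ltl f y z -> ltl f x z.
Proof. rewrite /ltl; lia. Qed.
Lemma ltl_tot f x y : x != y -> ltl f x y || ltl f y x.
Proof. rewrite /ltl; lia. Qed.
Lemma ltf_irr f x : ltf f x x = false.
Proof. exact: ltl_irr. Qed.
Lemma ltf_tr f x y z : ltf f x y -> ltf f y z -> ltf f x z.
Proof. rewrite /ltf=> h1 h2; exact: ltl_tr h2 h1. Qed.
Lemma ltf_tot f x y : x != y -> ltf f x y || ltf f y x.
Proof. rewrite /ltf orbC; exact: ltl_tot. Qed.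

Lemma rank_inj lt m i j :
  (forall x, lt x x = false) -> (forall x y z, lt x y -> lt y z -> lt x z) ->
  (forall x y, x != y -> lt x y || lt y x) ->
  i < m -> j < m -> rank lt m i = rank lt m j -> i = j.
Proof.
move=> h1 h2 h3 im jm e; apply/eqP; apply/negPn/negP => /h3 /orP[h|h].
  by have := rank_mono h1 h2 im h; rewrite e ltnn.
by have := rank_mono h1 h2 jm h; rewrite e ltnn.
Qed.


Definition ga (m : nat) (f : nat -> nat) (i : 'I_m) : 'I_m :=
  Ordinal (rank_lt (@ltl_irr f) (ltn_ord i)).
Definition gb (m : nat) (f : nat -> nat) (i : 'I_m) : 'I_m :=
  Ordinal (rank_lt (@ltf_irr f) (ltn_ord i)).
Lemma ga_inj (m : nat) (f : nat -> nat) : injective (@ga m f).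
Proof.
move=> i j [] e; apply/val_inj.
exact: (rank_inj (@ltl_irr f) (@ltl_tr f) (@ltl_tot f) (ltn_ord i) (ltn_ord j) e).
Qed.
Lemma gb_inj (m : nat) (f : nat -> nat) : injective (@gb m f).
Proof.
move=> i j [] e; apply/val_inj.
exact: (rank_inj (@ltf_irr f) (@ltf_tr f) (@ltf_tot f) (ltn_ord i) (ltn_ord j) e).
Qed.
Definition pa (m : nat) (f : nat -> nat) : 'S_m := perm (@ga_inj m f).
Definition pb (m : nat) (f : nat -> nat) : 'S_m := perm (@gb_inj m f).

Lemma entry_ord m d (A : 'M[nat]_(m, d)) (i : 'I_m) (j : 'I_d) :
  entry A i j = A i j.
Proof. by rewrite /entry !valK. Qed.

Definition thePerm m (A : 'M[nat]_(m, 3)) : {ffun 'I_3 -> 'S_m} :=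
  [ffun j : 'I_3 => if val j == 1 then @pb m (fun k => entry A k 1)
                    else @pa m (fun k => entry A k 0)].

Lemma rowsum_le m (A : 'M[nat]_(m, 3)) (Q : {ffun 'I_3 -> 'S_m}) (q : 'I_m) :
  \sum_(j < 3) permute_cols A Q q j <= maxrowsum A Q.
Proof. exact: (leq_bigmax (F := fun q => \sum_(j < 3) permute_cols A Q q j)). Qed.

Lemma sum3 (F : 'I_3 -> nat) : \sum_(j < 3) F j = F (inord 0) + F (inord 1) + F (inord 2).
Proof.
rewrite !big_ord_recr big_ord0 /=; congr (_ + _ + _); congr F; apply/val_inj; by rewrite /= inordK.
Qed.

Lemma main_bound m (A : 'M[nat]_(m, 3)) (Q : {ffun 'I_3 -> 'S_m}) :
  maxrowsum A (thePerm A) <= 2 * maxrowsum A Q.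
Proof.
apply/bigmax_leqP => r _.
set fa := fun k => entry A k 0; set fb := fun k => entry A k 1.
rewrite sum3 /permute_cols !mxE /thePerm !ffunE /= !inordK //=.
have efa (k : 'I_m) : fa k = A k (inord 0).
  by rewrite /fa -(entry_ord A k (inord 0)) inordK.
have efb (k : 'I_m) : fb k = A k (inord 1).
  by rewrite /fb -(entry_ord A k (inord 1)) inordK.
rewrite -/fa -/fb.
set i := ((@pa m fa)^-1)%g r; set l := ((@pb m fb)^-1)%g r.
have ri : (r : nat) = rank (ltl fa) m i.
  by rewrite -[in LHS](permKV (@pa m fa) r) -/i /pa permE.
have rl : (r : nat) = rank (ltf fb) m l.
  by rewrite -[in LHS](permKV (@pb m fb) r) -/l /pb permE.
set X := [set x : 'I_m | r <= x]; set Y := [set x : 'I_m | x <= r].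
set U := [set Q (inord 0) (((@pa m fa)^-1)%g x) | x in X].
set V := [set Q (inord 1) (((@pb m fb)^-1)%g x) | x in Y].
have cU : #|U| = #|X| by apply: card_imset => x y /perm_inj /perm_inj.
have cV : #|V| = #|Y| by apply: card_imset => x y /perm_inj /perm_inj.
have XY1 : X :|: Y = setT by apply/setP => x; rewrite !inE; lia.
have XY2 : X :&: Y = [set r].
  by apply/setP => x; rewrite !inE; apply/andP/eqP => [[h1 h2]|->]; [apply/val_inj => /=; lia|lia].
have cXY := cardsUI X Y; rewrite XY1 XY2 cardsT card_ord cards1 in cXY.
have cUV := cardsUI U V.
have : #|U :|: V| <= m by have := max_card (mem (U :|: V)); rewrite card_ord.
move=> hUV.
have : 0 < #|U :&: V| by lia.
case/card_gt0P => q; rewrite inE => /andP[/imsetP[x xX ->] /imsetP[y yY e]].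
rewrite inE in xX; rewrite inE in yY.
set k := ((@pa m fa)^-1)%g x in e *; set k' := ((@pb m fb)^-1)%g y in e.
have rk : (x : nat) = rank (ltl fa) m k.
  by rewrite -[in LHS](permKV (@pa m fa) x) -/k /pa permE.
have rk' : (y : nat) = rank (ltf fb) m k'.
  by rewrite -[in LHS](permKV (@pb m fb) y) -/k' /pb permE.
have h1 : A i (inord 0) <= A k (inord 0).
  have : ~~ ltl fa k i.
    apply/negP => h; have := rank_mono (@ltl_irr fa) (@ltl_tr fa) (ltn_ord k) h; lia.
  rewrite /ltl !efa; lia.
have h2 : A l (inord 1) <= A k' (inord 1).
  have : ~~ ltf fb l k'.
    apply/negP => h; have := rank_mono (@ltf_irr fb) (@ltf_tr fb) (ltn_ord l) h; lia.
  rewrite /ltf /ltl !efb; lia.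
have h3 := rowsum_le A Q (Q (inord 0) k).
rewrite sum3 /permute_cols !mxE in h3. rewrite permK e permK in h3.
have h4 := rowsum_le A Q (Q (inord 2) i).
rewrite sum3 /permute_cols !mxE in h4. rewrite permK in h4.
lia.
Qed.

Definition prog : seq instr := [::
  (IAdd 0 0 0);
  (IAdd 0 0 0);
  (IAdd 0 0 0);
  (IAdd 0 0 0);
  (IAdd 0 0 0);
  (IStore 0 1);
  (IConst 1 0);
  (IJle 0 1 175);
  (IConst 1 1);
  (IAdd 0 0 1);
  (IStore 0 2);
  (IAdd 0 0 1);
  (IStore 0 3);
  (IAdd 0 0 1);
  (IStore 0 4);
  (IAdd 0 0 1);
  (IStore 0 5);
  (IAdd 0 0 1);
  (IStore 0 6);
  (IAdd 0 0 1);
  (IStore 0 7);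
  (IAdd 0 0 1);
  (IStore 0 8);
  (IAdd 0 0 1);
  (IStore 0 9);
  (IAdd 0 0 1);
  (IStore 0 10);
  (IAdd 0 0 1);
  (IStore 0 11);
  (IAdd 0 0 1);
  (IStore 0 12);
  (IAdd 0 0 1);
  (IStore 0 13);
  (IAdd 0 0 1);
  (IStore 0 14);
  (IAdd 0 0 1);
  (IStore 0 15);
  (IAdd 0 0 1);
  (IStore 0 16);
  (IAdd 0 0 1);
  (IStore 0 17);
  (IAdd 0 0 1);
  (IStore 0 18);
  (IAdd 0 0 1);
  (IStore 0 19);
  (IAdd 0 0 1);
  (IStore 0 20);
  (IAdd 0 0 1);
  (IStore 0 21);
  (IConst 10 20);
  (ISub 5 0 10);
  (IAdd 6 5 5);
  (IConst 2 0);
  (IConst 3 3);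
  (IConst 4 32);
  (IConst 8 22);
  (IConst 10 21);
  (IAdd 9 5 10);
  (IConst 7 224);
  (IJle 5 7 74);
  (ILoad 10 8);
  (IStore 9 10);
  (IAdd 8 8 1);
  (IAdd 9 9 1);
  (ILoad 10 8);
  (IStore 9 10);
  (IAdd 8 8 1);
  (IAdd 9 9 1);
  (ILoad 10 8);
  (IStore 9 10);
  (IAdd 8 8 1);
  (IAdd 9 9 1);
  (IAdd 7 7 4);
  (IJle 1 1 59);
  (IConst 7 0);
  (IAdd 8 5 2);
  (IAdd 9 6 2);
  (IJle 5 7 113);
  (ILoad 11 8);
  (IAdd 10 8 1);
  (ILoad 12 10);
  (IConst 19 0);
  (IConst 20 0);
  (IAdd 13 5 2);
  (IConst 14 0);
  (IJle 5 14 104);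
  (ILoad 15 13);
  (IAdd 10 13 1);
  (ILoad 16 10);
  (IJle 8 13 93);
  (IAdd 17 11 1);
  (IAdd 18 12 1);
  (IJle 1 1 96);
  (IJle 13 8 101);
  (IAdd 17 11 2);
  (IAdd 18 12 2);
  (IJle 17 15 98);
  (IAdd 19 19 1);
  (IJle 18 16 100);
  (IJle 1 1 101);
  (IAdd 20 20 1);
  (IAdd 13 13 3);
  (IAdd 14 14 4);
  (IJle 1 1 85);
  (IStore 9 19);
  (IAdd 10 9 1);
  (IStore 10 20);
  (IAdd 10 10 1);
  (IStore 10 19);
  (IAdd 9 9 3);
  (IAdd 8 8 3);
  (IAdd 7 7 4);
  (IJle 1 1 77);
  (IConst 10 21);
  (IAdd 8 6 10);
  (IConst 9 22);
  (IConst 7 224);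
  (IJle 5 7 132);
  (ILoad 10 8);
  (IStore 9 10);
  (IAdd 8 8 1);
  (IAdd 9 9 1);
  (ILoad 10 8);
  (IStore 9 10);
  (IAdd 8 8 1);
  (IAdd 9 9 1);
  (ILoad 10 8);
  (IStore 9 10);
  (IAdd 8 8 1);
  (IAdd 9 9 1);
  (IAdd 7 7 4);
  (IJle 1 1 117);
  (IConst 10 20);
  (IAdd 0 6 10);
  (ILoad 21 0);
  (ISub 0 0 1);
  (ILoad 20 0);
  (ISub 0 0 1);
  (ILoad 19 0);
  (ISub 0 0 1);
  (ILoad 18 0);
  (ISub 0 0 1);
  (ILoad 17 0);
  (ISub 0 0 1);
  (ILoad 16 0);
  (ISub 0 0 1);
  (ILoad 15 0);
  (ISub 0 0 1);
  (ILoad 14 0);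
  (ISub 0 0 1);
  (ILoad 13 0);
  (ISub 0 0 1);
  (ILoad 12 0);
  (ISub 0 0 1);
  (ILoad 11 0);
  (ISub 0 0 1);
  (ILoad 10 0);
  (ISub 0 0 1);
  (ILoad 9 0);
  (ISub 0 0 1);
  (ILoad 8 0);
  (ISub 0 0 1);
  (ILoad 7 0);
  (ISub 0 0 1);
  (ILoad 6 0);
  (ISub 0 0 1);
  (ILoad 5 0);
  (ISub 0 0 1);
  (ILoad 4 0);
  (ISub 0 0 1);
  (ILoad 3 0);
  (ISub 0 0 1);
  (ILoad 2 0);
  (ISub 0 0 1);
  (ILoad 1 0);
  (IHalt)].

Definition memT := nat -> nat.
Definition runs pc (M : memT) n pc' M' :=
  forall t, exec prog (n + t) (pc, M) = exec prog t (pc', M').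
Definition reach pc (M : memT) N pcf (Q : memT -> Prop) :=
  exists n M', n <= N /\ Q M' /\ runs pc M n pcf M'.

Lemma execS p t s s' : step p s = Some s' -> exec p t.+1 s = exec p t s'.
Proof. move=> h. change (match step p s with None => Some s.2 | Some s'' => exec p t s'' end = exec p t s'). by rewrite h. Qed.

Lemma reach_done pc M N (Q : memT -> Prop) : Q M -> reach pc M N pc Q.
Proof. by move=> h; exists 0, M; split. Qed.

Lemma reach_step pc M N pcf Q :
  (match step prog (pc, M) with
   | Some (pc', M') => reach pc' M' N pcf Q | None => False end) ->
  reach pc M N.+1 pcf Q.
Proof.
case e: (step prog (pc, M)) => [[pc' M']|] // [n [M2 [hn [hQ hr]]]].
exists n.+1, M2; split => //; split => // t.
by rewrite addSn (execS _ e) hr.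
Qed.

Lemma reach_seq pc M N1 pc1 Q1 N2 pc2 Q2 :
  reach pc M N1 pc1 Q1 -> (forall M1, Q1 M1 -> reach pc1 M1 N2 pc2 Q2) ->
  reach pc M (N1 + N2) pc2 Q2.
Proof.
move=> [n1 [M1 [h1 [q1 r1]]]] /(_ _ q1) [n2 [M2 [h2 [q2 r2]]]].
exists (n1 + n2), M2; split; first by lia.
split => // t; by rewrite -addnA r1 r2.
Qed.

Lemma reach_mono pc M N N' pcf Q : N <= N' -> reach pc M N pcf Q -> reach pc M N' pcf Q.
Proof. move=> hN [n [M' [h1 h2]]]; exists n, M'; split => //; lia. Qed.

Lemma reach_post pc M N pcf (Q Q' : memT -> Prop) :
  (forall M, Q M -> Q' M) -> reach pc M N pcf Q -> reach pc M N pcf Q'.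
Proof. move=> hQ [n [M' [h1 [h2 h3]]]]; exists n, M'; split => //; split => //; exact: hQ. Qed.

Lemma reach_updE pc M r v r' v' N pcf Q : r = r' -> v = v' ->
  reach pc (upd M r' v') N pcf Q -> reach pc (upd M r v) N pcf Q.
Proof. by move=> -> ->. Qed.

Ltac ev0 := rewrite /upd /=;
  repeat match goal with H : ?M ?c = _ |- context [?M ?c] => is_var M; rewrite H end;
  repeat match goal with |- context [?x == ?y] =>
    first [have -> : (x == y) = false by lia | have -> : (x == y) = true by lia]; rewrite /=
  end.
Ltac norm := match goal with
 | |- reach _ (upd _ _ _) _ _ _ => apply: reach_updE; [ev0; reflexivity | ev0; reflexivity | ]
 | _ => idtac end.
Ltac stp := apply: reach_step; cbn [step nth prog]; norm.

Ltac ev := rewrite /upd /=;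
  repeat match goal with |- context [?x == ?y] =>
    first [have -> : (x == y) = false by lia | have -> : (x == y) = true by lia]; rewrite /=
  end.


Definition exi (i : instr) (pc : nat) (M : memT) : option (nat * memT) :=
  match i with
  | IConst r c => Some (pc.+1, upd M r c)
  | IAdd r a b => Some (pc.+1, upd M r (M a + M b))
  | ISub r a b => Some (pc.+1, upd M r (M a - M b))
  | ILoad r a => Some (pc.+1, upd M r (M (M a)))
  | IStore a r => Some (pc.+1, upd M (M a) (M r))
  | IJle a b l => Some (if M a <= M b then l else pc.+1, M)
  | IHalt => None
  end.

Lemma reach_stepI pc M N pcf Q i : nth IHalt prog pc = i ->
  (match exi i pc M with
   | Some (pc', M') => reach pc' M' N pcf Q | None => False end) ->
  reach pc M N.+1 pcf Q.
Proof. move=> e h; apply: reach_step; rewrite /step e; exact h. Qed.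

Ltac stpI e := apply: (reach_stepI e); cbn [exi]; norm.

Lemma reach_stepN pc M N pcf Q :
  (match step prog (pc, M) with
   | Some (pc', M') => reach pc' M' (N - 1) pcf Q | None => False end) ->
  0 < N -> reach pc M N pcf Q.
Proof.
move=> h hN; rewrite (_ : N = (N - 1).+1); last lia.
exact: reach_step.
Qed.

Ltac jmp := try (match goal with |- reach (if ?c then _ else _) _ _ _ _ =>
  first [have : c = true by ev0; lia | have : c = false by ev0; lia]; move=> -> end).
Ltac st := apply: reach_stepN; [cbn [step nth prog]; norm; jmp | try lia].

Definition I0 (M : memT) m j (M' : memT) :=
  [/\ M' 0 = 32 * m + j - 2, M' 1 = 1,
      (forall q, 1 <= q < j -> M' (32 * m + q - 1) = M q) &
      (forall x, j <= x < 32 * m -> M' x = M x)].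

Lemma P0a (M : memT) m : M 0 = m -> 1 <= m -> reach 0 M 9 9 (I0 M m 2).
Proof.
move=> h0 hm.
do 8 stp.
case: ifP => hj.
  exfalso; move: hj; ev0; lia.
stp.
apply: reach_done; split; ev0; try lia.
  move=> q hq; have -> : q = 1 by lia. ev0. done.
move=> x hx; ev0; done.
Qed.

Lemma evac_nth j : 2 <= j <= 21 ->
  nth IHalt prog (9 + 2 * (j - 2)) = IAdd 0 0 1 /\
  nth IHalt prog (10 + 2 * (j - 2)) = IStore 0 j.
Proof.
move=> h; have : j \in iota 2 20 by rewrite mem_iota; lia.
rewrite /= !in_cons.
do 20 (case/predU1P => [->|]; first by split).
by [].
Qed.

Lemma P0b (M : memT) m : 1 <= m -> forall n j M', 22 - j = n -> 2 <= j <= 22 ->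
  I0 M m j M' -> reach (9 + 2 * (j - 2)) M' (2 * n) 49 (I0 M m 22).
Proof.
move=> hm; elim=> [|n IH] j M' hn hj hI.
  have -> : j = 22 by lia. by apply: reach_done; have <- : j = 22 by lia.
have hj' : 2 <= j <= 21 by lia.
have [e1 e2] := evac_nth hj'.
case: hI => h0 h1 hq hx.
rewrite (_ : 2 * n.+1 = (2 * n).+2); last lia.
stpI e1. have -> : (9 + 2 * (j - 2)).+1 = 10 + 2 * (j - 2) by lia. stpI e2.
have -> : (10 + 2 * (j - 2)).+1 = 9 + 2 * (j.+1 - 2) by lia.
apply: IH; try lia.
split; ev0; try lia.
  move=> q hq'. ev0. case: eqP => hqe.
    have -> : q = j by lia. by rewrite hx //; lia.
  rewrite hq //. lia.
move=> x hx'; ev0; rewrite hx //; lia.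
Qed.

Definition Kst (M : memT) m :=
  M 1 = 1 /\ M 2 = 0 /\ M 3 = 3 /\ M 4 = 32 /\ M 5 = 32 * m /\ M 6 = 64 * m.

Definition Dat (f : memT) m (M : memT) :=
  forall k j, k < m -> j < 3 -> M (32 * m + 3 * k + j) = f (1 + 3 * k + j).

Definition C1 (f : memT) m i (M : memT) :=
  Kst M m /\ M 7 = 32 * i /\ M 8 = 1 + 3 * i /\ M 9 = 32 * m + 3 * i /\
  (forall k j, k < i -> j < 3 -> M (32 * m + 3 * k + j) = f (1 + 3 * k + j)) /\
  (forall x, 22 <= x < 32 * m -> M x = f x).

Lemma P1a (f : memT) m M : 1 <= m -> I0 f m 22 M -> reach 49 M 10 59 (C1 f m 7).
Proof.
move=> hm [h0 h1 hq hx].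
do 10 stp.
apply: reach_done.
split; first by do 5 (split; first by ev0; lia); ev0; lia.
split; first by ev0.
split; first by ev0.
split; first by ev0; lia.
split.
  move=> k j hk hj; ev0.
  have := hq (1 + 3 * k + j); rewrite (_ : 32 * m + (1 + 3 * k + j) - 1 = 32 * m + 3 * k + j); last lia.
  move=> ->; lia.
move=> x hx'; ev0; rewrite hx //; lia.
Qed.

Ltac ifs := repeat (case: ifP => /eqP ?).

Lemma P1b (f : memT) m : 1 <= m -> forall n i M, m - i = n -> 7 <= i ->
  C1 f m i M -> reach 59 M (15 * n + 1) 74 (fun M' => Kst M' m /\ Dat f m M').
Proof.
move=> hm; elim=> [|n IH] i M hn hi [[k1 [k2 [k3 [k4 [k5 k6]]]]] [h7 [h8 [h9 [hD hX]]]]].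
  st.
  apply: reach_done; split; first by do 5 (split => //).
  move=> k j hk hj'; apply: hD => //; lia.
st.
do 14 st.
apply: reach_mono; last apply: (IH i.+1); try lia.
split; first by do 5 (split; first by ev0; lia); ev0; lia.
do 3 (split; first by ev0; lia).
split.
  move=> k j hk hj; ev0; ifs; try (rewrite hX; [congr f; lia | lia]).
  rewrite hD //; lia.
move=> x hx; ev0; rewrite hX //.
Qed.

Definition fa (f : memT) k := f (1 + 3 * k).
Definition fb (f : memT) k := f (2 + 3 * k).
Definition ra f m i := count (fun x => ltl (fa f) x i) (iota 0 m).
Definition rb f m i := count (fun x => ltl (fb f) i x) (iota 0 m).

Definition RR f m i (M : memT) := forall k, k < i ->
  [/\ M (64 * m + 3 * k) = ra f m k, M (64 * m + 3 * k + 1) = rb f m k &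
      M (64 * m + 3 * k + 2) = ra f m k].

Definition Oinv f m i (M : memT) :=
  Kst M m /\ Dat f m M /\ M 7 = 32 * i /\ M 8 = 32 * m + 3 * i /\
  M 9 = 64 * m + 3 * i /\ RR f m i M.

Definition In f m i k (M : memT) :=
  Oinv f m i M /\ M 11 = fa f i /\ M 12 = fb f i /\ M 13 = 32 * m + 3 * k /\
  M 14 = 32 * k /\ M 19 = count (fun x => ltl (fa f) x i) (iota 0 k) /\
  M 20 = count (fun x => ltl (fb f) i x) (iota 0 k).

Lemma count_snoc (p : pred nat) k :
  count p (iota 0 k.+1) = count p (iota 0 k) + p k.
Proof. by rewrite -addn1 iotaD count_cat /= addn0. Qed.

Ltac cif := match goal with |- reach (if ?c then _ else _) _ _ _ _ =>
  let hc := fresh "c" in destruct c eqn:hc; cbv beta iota end.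
Ltac runto pc := repeat (match goal with |- reach pc _ _ _ _ => fail 1 | _ => st end).

Lemma cont f m i k (M : memT) e N Post :
  1 <= m -> i < m -> k < m -> k != i -> (k < i -> e = 1) -> (i < k -> e = 0) ->
  In f m i k M -> M 15 = fa f k -> M 16 = fb f k ->
  M 17 = fa f i + e -> M 18 = fb f i + e ->
  (forall M', In f m i k.+1 M' -> reach 85 M' N 104 Post) ->
  reach 96 M (N + 7) 104 Post.
Proof.
move=> hm him hkm hki he1 he0
  [[[k1 [k2 [k3 [k4 [k5 k6]]]]] [hD [h7 [h8 [h9 hR]]]]] [h11 [h12 [h13 [h14 [h19 h20]]]]]]
  h15 h16 h17 h18 IH.
have ea : ltl (fa f) k i = ~~ (fa f i + e <= fa f k).
  rewrite /ltl; case: (ltngtP k i) => c; [rewrite he1 // | rewrite he0 // | lia]; lia.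
have eb : ltl (fb f) i k = (fb f i + e <= fb f k).
  rewrite /ltl; case: (ltngtP k i) => c; [rewrite he1 // | rewrite he0 // | lia]; lia.
st; cif; (runto 98; st; cif; runto 85);
  (apply: reach_mono; last apply: IH); try lia;
  move: c c0; ev0 => c c0;
  (split; [split; [by do 5 (split; first by ev0; lia); ev0; lia
    | split; [by move=> ? ? ? ?; ev0; apply: hD
    | by do 3 (split; first by ev0; lia); move=> ? ?; ev0; apply: hR]] | ]);
  do 4 (split; first by ev0; lia);
  split; rewrite count_snoc ?ea ?eb ?c ?c0 /=; ev0; lia.
Qed.

Lemma In_upd f m i k M r v : 1 <= m -> 9 < r < 22 -> r != 11 -> r != 12 -> r != 13 ->
  r != 14 -> r != 19 -> r != 20 -> In f m i k M -> In f m i k (upd M r v).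
Proof.
move=> hm ? ? ? ? ? ? ?
  [[[k1 [k2 [k3 [k4 [k5 k6]]]]] [hD [h7 [h8 [h9 hR]]]]] [h11 [h12 [h13 [h14 [h19 h20]]]]]].
split; [split; [by do 5 (split; first by ev0; lia); ev0; lia
    | split; [by move=> ? ? ? ?; ev0; apply: hD
    | by do 3 (split; first by ev0; lia); move=> ? ?; ev0; apply: hR]] | ].
do 4 (split; first by ev0; lia).
by split; ev0.
Qed.

Lemma inner f m i : 1 <= m -> i < m -> forall n k M, m - k = n -> k <= m ->
  In f m i k M -> reach 85 M (16 * n + 1) 104 (In f m i m).
Proof.
move=> hm him; elim=> [|n IH] k M hn hkm hI.
  have ekm : k = m by lia.
  have hI' := hI.
  case: hI' => [[[k1 [k2 [k3 [k4 [k5 k6]]]]] _] [_ [_ [_ [h14 _]]]]].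
  st. apply: reach_done; by subst k.
have hI' := hI.
case: hI' => [[[k1 [k2 [k3 [k4 [k5 k6]]]]] [hD [h7 [h8 [h9 hR]]]]] [h11 [h12 [h13 [h14 [h19 h20]]]]]].
have hk : k < m by lia.
have dA : M (32 * m + 3 * k) = fa f k.
  by rewrite /fa -[32 * m + 3 * k]addn0 hD // addn0.
have dB : M (32 * m + 3 * k + 1) = fb f k.
  by rewrite /fb hD //; congr f; lia.
have IH' : forall M', In f m i k.+1 M' -> reach 85 M' (16 * n + 1) 104 (In f m i m).
  move=> M' h; apply: (IH k.+1 M' _ _ h); lia.
do 5 st.
cif; move: c; ev0 => c.
  st. cif; move: c0; ev0 => c0.
    have ek : k = i by lia. subst k.
    do 3 st.
    apply: reach_mono; last apply: IH'; first lia.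
    split; [split; [by do 5 (split; first by ev0; lia); ev0; lia
      | split; [by move=> ? ? ? ?; ev0; apply: hD
      | by do 3 (split; first by ev0; lia); move=> ? ?; ev0; apply: hR]] | ].
    do 4 (split; first by ev0; lia).
    by split; rewrite count_snoc ltl_irr /=; ev0; lia.
  do 2 st.
  apply: reach_mono; last apply: (cont (e := 0)) IH'; try lia.
    do 5 (apply: In_upd => //).
  1-4: by ev0.
do 3 st.
apply: reach_mono; last apply: (cont (e := 1)) IH'; try lia.
  do 5 (apply: In_upd => //).
all: by ev0.
Qed.

Lemma O_upd f m i M r v : 1 <= m -> 9 < r < 22 -> Oinv f m i M -> Oinv f m i (upd M r v).
Proof.
move=> hm ? [[k1 [k2 [k3 [k4 [k5 k6]]]]] [hD [h7 [h8 [h9 hR]]]]].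
split; [by do 5 (split; first by ev0; lia); ev0; lia
    | split; [by move=> ? ? ? ?; ev0; apply: hD
    | by do 3 (split; first by ev0; lia); move=> ? ?; ev0; apply: hR]].
Qed.

Lemma tail104 f m i M : 1 <= m -> i < m -> In f m i m M -> reach 104 M 9 77 (Oinv f m i.+1).
Proof.
move=> hm him
  [[[k1 [k2 [k3 [k4 [k5 k6]]]]] [hD [h7 [h8 [h9 hR]]]]] [h11 [h12 [h13 [h14 [h19 h20]]]]]].
do 9 st.
apply: reach_done.
split; [by do 5 (split; first by ev0; lia); ev0; lia | ].
split; [by move=> ? ? ? ?; ev0; apply: hD | ].
do 3 (split; first by ev0; lia).
move=> k hk; split; ev0; ifs; try lia; try ((have eqki : k = i by lia); subst k; first [by rewrite /ra | by rewrite /rb]); have [? ? ?] := hR k ltac:(lia); done.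
Qed.

Lemma entry77 f m i M : 1 <= m -> i < m -> Oinv f m i M -> reach 77 M 8 85 (In f m i 0).
Proof.
move=> hm him hO.
have hO' := hO.
case: hO' => [[k1 [k2 [k3 [k4 [k5 k6]]]]] [hD [h7 [h8 [h9 hR]]]]].
have dA : M (32 * m + 3 * i) = fa f i.
  by rewrite /fa -[32 * m + 3 * i]addn0 hD // addn0.
have dB : M (32 * m + 3 * i + 1) = fb f i.
  by rewrite /fb hD //; congr f; lia.
do 8 st.
apply: reach_done.
split; first by do 7 (apply: O_upd => //).
by do 5 (split; first by ev0; lia); ev0.
Qed.

Lemma outer f m : 1 <= m -> forall n i M, m - i = n -> i <= m -> Oinv f m i M ->
  reach 77 M ((16 * m + 20) * n + 1) 113 (Oinv f m m).
Proof.
move=> hm; elim=> [|n IH] i M hn him hO.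
  have eim : i = m by lia.
  have hO' := hO.
  case: hO' => [[k1 [k2 [k3 [k4 [k5 k6]]]]] [hD [h7 _]]].
  st. apply: reach_done; by subst i.
have hi : i < m by lia.
apply: reach_mono; last first.
  apply: reach_seq; first exact: entry77 hO.
  move=> M1 h1; apply: reach_seq; first by apply: (inner hm hi _ _ h1); rewrite ?subn0.
  move=> M2 h2; apply: reach_seq; first exact: tail104 h2.
  move=> M3 h3; apply: (IH i.+1 M3) => //; lia.
rewrite mulnS; nia.
Qed.

Lemma P3s f m M : 1 <= m -> Kst M m /\ Dat f m M -> reach 74 M 3 77 (Oinv f m 0).
Proof.
move=> hm [[k1 [k2 [k3 [k4 [k5 k6]]]]] hD].
do 3 st.
apply: reach_done.
split; [by do 5 (split; first by ev0; lia); ev0; lia | ].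
split; [by move=> ? ? ? ?; ev0; apply: hD | ].
do 3 (split; first by ev0; lia).
move=> *; lia.
Qed.

Definition res f m k j := if j == 1 then rb f m k else ra f m k.
Definition ResX f m (M : memT) := forall k j, k < m -> j < 3 ->
  M (64 * m + 3 * k + j) = res f m k j.

Definition C2 f m i (M : memT) :=
  M 1 = 1 /\ M 4 = 32 /\ M 5 = 32 * m /\ M 6 = 64 * m /\ M 7 = 32 * i /\
  M 8 = 64 * m + 3 * i /\ M 9 = 1 + 3 * i /\ ResX f m M /\
  (forall k j, 7 <= k < i -> k < m -> j < 3 -> M (1 + 3 * k + j) = res f m k j).

Definition Post2 f m (M : memT) :=
  M 1 = 1 /\ M 6 = 64 * m /\ ResX f m M /\
  (forall k j, 7 <= k < m -> j < 3 -> M (1 + 3 * k + j) = res f m k j).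

Lemma P4a f m M : 1 <= m -> Oinv f m m M -> reach 113 M 4 117 (C2 f m 7).
Proof.
move=> hm [[k1 [k2 [k3 [k4 [k5 k6]]]]] [hD [h7 [h8 [h9 hR]]]]].
do 4 st.
apply: reach_done.
do 7 (split; first by ev0; lia).
split; last by move=> *; lia.
move=> k j hk hj; ev0; have [e0 e1 e2] := hR k hk.
rewrite /res; case: j hj => [|[|[|j]]] hj //=; rewrite ?addn0 //; lia.
Qed.

Lemma P4b f m : 1 <= m -> forall n i M, m - i = n -> 7 <= i ->
  C2 f m i M -> reach 117 M (15 * n + 1) 132 (Post2 f m).
Proof.
move=> hm; elim=> [|n IH] i M hn hi [k1 [k4 [k5 [k6 [h7 [h8 [h9 [hR hC]]]]]]]].
  st. apply: reach_done; do 3 (split => //).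
  move=> k j hk hj; apply: hC => //; lia.
have dd : forall j, j < 3 -> M (64 * m + 3 * i + j) = res f m i j.
  move=> j hj; apply: hR => //; lia.
have d0 := dd 0 isT; have d1 := dd 1 isT.
have d2 : M (64 * m + 3 * i + 1 + 1) = res f m i 2 by rewrite -(dd 2 isT); congr M; lia.
rewrite addn0 in d0.
do 15 st.
apply: reach_mono; last apply: (IH i.+1); try lia.
do 7 (split; first by ev0; lia).
split.
  move=> k j hk hj; ev0; ifs; try lia; apply: hR => //.
move=> k j hk hkm hj; ev0; ifs; try lia;
  try ((have eqki : k = i by lia); subst k;
       congr (res f m i); lia).
all: apply: hC => //; lia.
Qed.

Definition Tinv f m q (M : memT) :=
  M 0 = 64 * m + q - 1 /\ M 1 = 1 /\ ResX f m M /\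
  (forall k j, 7 <= k < m -> j < 3 -> M (1 + 3 * k + j) = res f m k j) /\
  (forall k j, k < 7 -> k < m -> j < 3 -> q < 1 + 3 * k + j -> M (1 + 3 * k + j) = res f m k j).

Lemma P4c f m M : 1 <= m -> Post2 f m M -> reach 132 M 2 134 (Tinv f m 21).
Proof.
move=> hm [h1 [h6 [hR hC]]].
do 2 st.
apply: reach_done.
do 2 (split; first by ev0; lia).
split; first by move=> k j hk hj; ev0; apply: hR.
split; first by move=> k j hk hj; ev0; apply: hC.
move=> *; lia.
Qed.

Lemma tail_nth q : 2 <= q <= 21 ->
  nth IHalt prog (134 + 2 * (21 - q)) = ILoad q 0 /\
  nth IHalt prog (135 + 2 * (21 - q)) = ISub 0 0 1.
Proof.
move=> h; have : q \in iota 2 20 by rewrite mem_iota; lia.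
rewrite /= !in_cons.
do 20 (case/predU1P => [->|]; first by split).
by [].
Qed.

Lemma P4d f m : 1 <= m -> forall n q M, q - 1 = n -> 1 <= q <= 21 ->
  Tinv f m q M -> reach (134 + 2 * (21 - q)) M (2 * n) 174 (Tinv f m 1).
Proof.
move=> hm; elim=> [|n IH] q M hn hq hT.
  have -> : q = 1 by lia. apply: reach_done. by have <- : q = 1 by lia.
have hq' : 2 <= q <= 21 by lia.
have [e1 e2] := tail_nth hq'.
case: hT => [h0 [h1 [hR [hC hL]]]].
rewrite (_ : 2 * n.+1 = (2 * n).+2); last lia.
stpI e1. have -> : (134 + 2 * (21 - q)).+1 = 135 + 2 * (21 - q) by lia. stpI e2.
have -> : (135 + 2 * (21 - q)).+1 = 134 + 2 * (21 - q.-1) by lia.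
apply: IH; try lia.
do 2 (split; first by ev0; lia).
split; first by move=> k j hk hj; ev0; apply: hR.
split; first by move=> k j hk hj; ev0; apply: hC.
move=> k j hk hkm hj hqk; ev0; ifs.
  rewrite (_ : 64 * m + q - 1 = 64 * m + 3 * k + j); last lia.
  by apply: hR.
apply: hL => //; lia.
Qed.

Lemma P4e f m M : 1 <= m -> Tinv f m 1 M -> reach 174 M 1 175
  (fun M' => forall k j, k < m -> j < 3 -> M' (1 + 3 * k + j) = res f m k j).
Proof.
move=> hm [h0 [h1 [hR [hC hL]]]].
st.
apply: reach_done.
move=> k j hk hj; ev0; ifs.
  have [-> ->] : k = 0 /\ j = 0 by lia.
  rewrite -(hR 0 0) //; congr M; lia.
case: (ltnP k 7) => hk7.
  apply: hL => //; lia.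
apply: hC => //; lia.
Qed.

Lemma exec_halt t M : exec prog t (175, M) = Some M.
Proof. by case: t. Qed.

Lemma enc_val m (A : 'M[nat]_(m, 3)) x j : x < m -> j < 3 ->
  encode_input A (1 + 3 * x + j) = entry A x j.
Proof.
move=> hx hj; rewrite (_ : 1 + 3 * x + j = (3 * x + j).+1); last lia.
rewrite /encode_input.
have -> : (3 * x + j < 3 * m) = true by lia.
have -> : (3 * x + j) %/ 3 = x by lia.
have -> : (3 * x + j) %% 3 = j by lia.
by [].
Qed.

Lemma reach0 m (A : 'M[nat]_(m, 3)) : m = 0 -> reach 0 (encode_input A) 8 175 (fun _ => True).
Proof.
move=> hm; subst m.
set f := encode_input A.
have h0 : f 0 = 0 by rewrite /f /encode_input.
have h1 : f 1 = 0 by rewrite /f /encode_input.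
do 8 st.
by apply: reach_done.
Qed.

Lemma reach_all m (A : 'M[nat]_(m, 3)) : 1 <= m ->
  reach 0 (encode_input A) (200 * (m + 1) ^ 2) 175
    (fun M' => forall k j, k < m -> j < 3 -> M' (1 + 3 * k + j) = res (encode_input A) m k j).
Proof.
move=> hm; set f := encode_input A.
have h0 : f 0 = m by [].
apply: reach_mono; last first.
apply: reach_seq; first exact: (P0a h0 hm).
move=> M1 h1; apply: reach_seq; first exact: (@P0b f m hm 20 2 M1 erefl isT h1).
move=> M2 h2; apply: reach_seq; first exact: P1a hm h2.
move=> M3 h3; apply: reach_seq; first exact: (@P1b f m hm (m - 7) 7 M3 erefl isT h3).
move=> M4 h4; apply: reach_seq; first exact: P3s hm h4.
move=> M5 h5; apply: reach_seq; first exact: (@outer f m hm m 0 M5 (subn0 m) (leq0n m) h5).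
move=> M6 h6; apply: reach_seq; first exact: P4a hm h6.
move=> M7 h7; apply: reach_seq; first exact: (@P4b f m hm (m - 7) 7 M7 erefl isT h7).
move=> M8 h8; apply: reach_seq; first exact: P4c hm h8.
move=> M9 h9; apply: reach_seq; first exact: (@P4d f m hm 20 21 M9 erefl isT h9).
move=> M10 h10; exact: P4e hm h10.
nia.
Qed.

Lemma fa_eq m (A : 'M[nat]_(m, 3)) x : x < m -> fa (encode_input A) x = entry A x 0.
Proof. move=> hx; rewrite /fa -(enc_val A hx (isT : 0 < 3)) addn0 //. Qed.
Lemma fb_eq m (A : 'M[nat]_(m, 3)) x : x < m -> fb (encode_input A) x = entry A x 1.
Proof. move=> hx; rewrite /fb -(enc_val A hx (isT : 1 < 3)); congr encode_input; lia. Qed.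

Theorem lemma2 :
  exists (p : seq instr) (c k : nat),
    forall (m : nat) (A : 'M[nat]_(m, 3)),
      exists (t : nat) (M : nat -> nat) (P : {ffun 'I_3 -> 'S_m}),
        [/\ t <= c * (input_size A).+1 ^ k,
            exec p t (0, encode_input A) = Some M,
            output_encodes M P
          & maxrowsum A P <= 2 * gamma A].
Proof.
exists prog, 200, 2 => m A.
have hsz : m <= input_size A by rewrite /input_size leq_addr.
case: (posnP m) => hm.
  have [n [M' [hn [_ hr]]]] := reach0 A hm.
  exists (200 * (input_size A).+1 ^ 2), M', [ffun => 1%g]; split => //.
  - rewrite (_ : 200 * (input_size A).+1 ^ 2 = n + (200 * (input_size A).+1 ^ 2 - n)).
      by rewrite hr exec_halt.
    have : 1 <= (input_size A).+1 ^ 2 by rewrite expn_gt0.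
    lia.
  - by subst m; case.
  - by subst m; rewrite /maxrowsum big_ord0.
have [n [M' [hn [hQ hr]]]] := reach_all A hm.
have hb : 200 * (m + 1) ^ 2 <= 200 * (input_size A).+1 ^ 2.
  by rewrite leq_mul2l /= leq_exp2r // addn1 ltnS.
exists (200 * (input_size A).+1 ^ 2), M', (thePerm A); split => //.
- rewrite (_ : 200 * (input_size A).+1 ^ 2 = n + (200 * (input_size A).+1 ^ 2 - n)); last lia.
  by rewrite hr exec_halt.
- move=> i j; rewrite hQ //; rewrite /res /thePerm ffunE.
  case: ifP => hj1; rewrite permE /= /rank.
    rewrite /rb; apply: eq_in_count => x; rewrite mem_iota => hx /=.
    by rewrite /ltf /ltl !fb_eq //; lia.
  rewrite /ra; apply: eq_in_count => x; rewrite mem_iota => hx /=.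
  by rewrite /ltl !fa_eq //; lia.
- rewrite /gamma; exact: main_bound.
Qed.
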